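(* Let $G$ be a positively $0$-transitive Lie superalgebra such that $G_+$ is generated by $G_1$; let $U$ be the universal Lie superalgebra associated to $U_1:=G_1$, let $D_{2+}\subseteq U_{2+}$ be the kernel of the canonical surjective morphism $U_+\to G_+$ restricting to the identity on $U_1$ (so $G_+\cong U_+/D_{2+}$), and let $\rho:G_{1-}\to U_{1-}$ be the map defined by $\rho(u)=u$ for $u\in G_1$ and $\rho(x)(u)=\rho([x,u])$ for $x\in G_{0-}$, $u\in U_1$. Set $T_1=U_1$, fix $p\ge 0$, and let $T_0,\ldots,T_{-p}$ be subspaces of $U_0,\ldots,U_{-p}$ such that for $0\le k\le p$: $\rho(G_{-k})\subseteq T_{-k}\subseteq\mathrm{Hom}(U_1,T_{-k+1})$ and $[T_{-k},D_{2+}]\subseteq D_{2+}$. Then $G$ embeds (via an injective Lie superalgebra morphism) into the reduced prolongation $N'/D_{2+}$ of $G_+$ with respect to $T_{-p}\oplus\cdots\oplus T_{-1}\oplus T_0$.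
   Context: All vector spaces are over $\mathbb{K}=\mathbb{R}$ or $\mathbb{C}$, $\mathbb{Z}$-graded, parity equal to degree mod 2. A Lie superalgebra is a graded space with degree-preserving bracket satisfying graded antisymmetry and graded Jacobi. $G_\pm=\bigoplus_{k\ge1}G_{\pm k}$, $G_{p-}=\bigoplus_{k\le p}G_k$, $U_{2+}=\bigoplus_{k\ge2}U_k$. $G$ is positively $0$-transitive if for $x\in G_{0-}$, $[G_+,x]=0$ implies $x=0$. Universal Lie superalgebra: for $U_1$ concentrated in degree 1 (odd), put $U_0=\mathrm{End}(U_1)$, $U_{-p+1}=\mathrm{Hom}(U_1,U_{-p+2})$ for $p\ge2$; on $U_{1-}$ define brackets recursively by $[x,u]=x(u)$, $[u,x]=-(-1)^{|x|}x(u)$, $[x,y](u)=[x,y(u)]+(-1)^{|y|}[x(u),y]$ ($x,y\in U_{0-}$, $u\in U_1$); $U$ is the unique Lie superalgebra extending this semilocal Lie superalgebra with $U_+$ free on $U_1$. Reduced prolongation: with $N=\{x\in U:[x,d]\in D_{2+}\ \forall d\in D_{2+}\}$ the idealiser of $D_{2+}$, put $N'_{-p}=T_{-p}$, $N'_{-k}=\mathrm{Hom}(U_1,N'_{-k+1})\cap N_{-k}$ for $k\ge p+1$, and $N'=\bigoplus_{k\ge p+1}N'_{-k}\oplus T_{-p}\oplus\cdots\oplus T_0\oplus U_+$ (a subalgebra of $N$ containing $D_{2+}$ as an ideal); the reduced prolongation is $N'/D_{2+}$. *)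

(* Defs.v *)
(* Graded Lie superalgebras over a numeric field K
   (covers K = R and K = C), modelled inside a K-vector space V
   by a family of homogeneous-component predicates and a bracket. *)
From HB Require Import structures.
From mathcomp Require Import all_boot all_order all_algebra.
Set Implicit Arguments. Unset Strict Implicit. Unset Printing Implicit Defensive.
Import Order.TTheory GRing.Theory Num.Theory.
Local Open Scope ring_scope.

Section Defs.
Variable K : numFieldType.

Definition subspace (V : lmodType K) (P : V -> Prop) : Prop :=
  P 0 /\ forall (a : K) x y, P x -> P y -> P (a *: x + y).

Definition lin_on (V W : lmodType K) (P : V -> Prop) (f : V -> W) : Prop :=
  forall (a : K) x y, P x -> P y -> f (a *: x + y) = a *: f x + f y.

(* v lies in the sum of the homogeneous components hom k with Q k
   (e.g. Q k = (k <= p) gives V_{p-}, Q k = (0 < k) gives V_+). *)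
Definition span_of (V : lmodType K) (Q : int -> bool) (hom : int -> V -> Prop)
  (v : V) : Prop :=
  exists (s : seq int) (f : int -> V),
    (forall k, k \in s -> Q k /\ hom k (f k)) /\ v = \sum_(k <- s) f k.

Definition pos (k : int) : bool := 0 < k.

Definition graded (V : lmodType K) (hom : int -> V -> Prop) : Prop :=
  (forall k, subspace (hom k)) /\
  (forall v, span_of predT hom v) /\
  (forall (s : seq int) (f : int -> V), uniq s ->
     (forall k, k \in s -> hom k (f k)) -> \sum_(k <- s) f k = 0 ->
     forall k, k \in s -> f k = 0).

(* graded Lie superalgebra, parity = degree mod 2 *)
Definition is_lie_super (V : lmodType K) (hom : int -> V -> Prop)
  (br : V -> V -> V) : Prop :=
  graded hom /\
  (forall (a : K) x y z, br (a *: x + y) z = a *: br x z + br y z) /\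
  (forall (a : K) x y z, br z (a *: x + y) = a *: br z x + br z y) /\
  (forall (a b : int) x y, hom a x -> hom b y -> hom (a + b) (br x y)) /\
  (forall (a b : int) x y, hom a x -> hom b y ->
     br x y = - ((-1 : K) ^ (a * b) *: br y x)) /\
  (forall (a b : int) x y z, hom a x -> hom b y ->
     br x (br y z) = br (br x y) z + (-1 : K) ^ (a * b) *: br y (br x z)).

Definition gen_sub (V : lmodType K) (br : V -> V -> V) (S : V -> Prop) (v : V)
  : Prop :=
  forall P : V -> Prop, subspace P -> (forall x, S x -> P x) ->
    (forall x y, P x -> P y -> P (br x y)) -> P v.

Definition pos_zero_trans (V : lmodType K) (hom : int -> V -> Prop)
  (br : V -> V -> V) : Prop :=
  forall x, span_of (fun k => k <= 0) hom x ->
    (forall y, span_of pos hom y -> br y x = 0) -> x = 0.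

Definition lie_mor_pos (V W : lmodType K) (hom : int -> V -> Prop)
  (br : V -> V -> V) (homW : int -> W -> Prop) (brW : W -> W -> W)
  (phi : V -> W) : Prop :=
  lin_on (span_of pos hom) phi /\
  (forall k v, 0 < k -> hom k v -> homW k (phi v)) /\
  (forall x y, span_of pos hom x -> span_of pos hom y ->
     phi (br x y) = brW (phi x) (phi y)).

Definition free_pos (V : lmodType K) (hom : int -> V -> Prop)
  (br : V -> V -> V) : Prop :=
  forall (W : lmodType K) (homW : int -> W -> Prop) (brW : W -> W -> W),
    is_lie_super homW brW ->
    forall f : V -> W, lin_on (hom 1) f ->
      (forall u, hom 1 u -> homW 1 (f u)) ->
      exists phi : V -> W,
        (lie_mor_pos hom br homW brW phi /\ forall u, hom 1 u -> phi u = f u) /\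
        forall psi : V -> W,
          lie_mor_pos hom br homW brW psi -> (forall u, hom 1 u -> psi u = f u) ->
          forall v, span_of pos hom v -> psi v = phi v.

(* U_0 = End(U_1), U_{-k} = Hom(U_1, U_{-k+1}) via x |-> [x, .] *)
Definition universal_neg (V : lmodType K) (hom : int -> V -> Prop)
  (br : V -> V -> V) : Prop :=
  forall k : nat,
    (forall x, hom (- k%:Z) x -> (forall u, hom 1 u -> br x u = 0) -> x = 0) /\
    (forall f : V -> V, lin_on (hom 1) f ->
       (forall u, hom 1 u -> hom (1 - k%:Z) (f u)) ->
       exists x, hom (- k%:Z) x /\ forall u, hom 1 u -> br x u = f u).

Definition inD (V W : lmodType K) (hom : int -> V -> Prop) (pi : V -> W) (d : V)
  : Prop := span_of pos hom d /\ pi d = 0.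

Definition inN (V W : lmodType K) (hom : int -> V -> Prop) (br : V -> V -> V)
  (pi : V -> W) (x : V) : Prop :=
  forall d, inD hom pi d -> inD hom pi (br x d).

(* Nprime_neg j = N'_{-(p+j)} ; T k stands for T_{-k} *)
Fixpoint Nprime_neg (V W : lmodType K) (hom : int -> V -> Prop)
  (br : V -> V -> V) (pi : V -> W) (p : nat) (T : nat -> V -> Prop) (j : nat)
  : V -> Prop :=
  match j with
  | 0 => T p
  | j'.+1 => fun x => hom (- (p + j)%:Z) x /\ inN hom br pi x /\
              forall u, hom 1 u -> Nprime_neg hom br pi p T j' (br x u)
  end.

(* N' = (+)_{k>=p+1} N'_{-k} (+) T_{-p} (+) ... (+) T_0 (+) U_+ *)
Definition inNprime (V W : lmodType K) (hom : int -> V -> Prop)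
  (br : V -> V -> V) (pi : V -> W) (p : nat) (T : nat -> V -> Prop) (v : V)
  : Prop :=
  exists s : seq V,
    (forall w, w \in s ->
       (exists j, Nprime_neg hom br pi p T j w) \/
       (exists k, (k <= p)%N /\ T k w) \/
       (exists m : int, 0 < m /\ hom m w)) /\
    v = \sum_(w <- s) w.

(* injective graded Lie superalgebra morphism G -> N'/D_{2+}, given by
   representatives in N' (maps into the quotient = maps up to D_{2+}) *)
Definition embeds_in_reduced_prolongation (VG VU : lmodType K)
  (homG : int -> VG -> Prop) (brG : VG -> VG -> VG)
  (homU : int -> VU -> Prop) (brU : VU -> VU -> VU) (pi : VU -> VG)
  (p : nat) (T : nat -> VU -> Prop) : Prop :=
  exists phi : VG -> VU,
    (forall x, inNprime homU brU pi p T (phi x)) /\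
    (forall (a : K) x y, inD homU pi (phi (a *: x + y) - (a *: phi x + phi y))) /\
    (forall x y, inD homU pi (phi (brG x y) - brU (phi x) (phi y))) /\
    (forall k x, homG k x -> exists d, inD homU pi d /\ homU k (phi x - d)) /\
    (forall x, inD homU pi (phi x) -> x = 0).

End Defs.

(* Main.v *)
Require Import Defs.
From HB Require Import structures.
From mathcomp Require Import all_boot all_order all_algebra.
From mathcomp Require Import boolp zify.
From Stdlib Require Import ClassicalEpsilon.
Import Order.TTheory GRing.Theory Num.Theory.
Local Open Scope ring_scope.

Module Aux.
Set Implicit Arguments. Unset Strict Implicit. Unset Printing Implicit Defensive.

Lemma sum_sub (V : zmodType) (r t : seq int) (g : int -> V) :
  uniq r -> uniq t -> {subset r <= t} ->
  (forall k, k \in t -> k \notin r -> g k = 0) ->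
  \sum_(k <- t) g k = \sum_(k <- r) g k.
Proof.
move=> ur ut srt g0.
rewrite (bigID (mem r)) /= [X in _ + X]big1_seq ?addr0; last first.
  by move=> k /andP[kr kt]; apply: g0.
rewrite -big_filter; apply: perm_big; apply: uniq_perm.
- exact: filter_uniq.
- exact: ur.
move=> k; rewrite mem_filter; case kr: (k \in r) => //=; exact: srt.
Qed.

Lemma sum_pick (V : zmodType) (r : seq int) (m : int) (F : int -> V) :
  uniq r -> \sum_(j <- r) (if m == j then F j else 0) = if m \in r then F m else 0.
Proof.
move=> ur; case: ifP => mr.
  rewrite (@sum_sub _ [:: m]) //; first by rewrite big_seq1 eqxx.
  - by move=> k; rewrite inE => /eqP->.
  - by move=> k _; rewrite inE eq_sym => /negbTE->.
rewrite big1_seq // => j /andP[_ jr]; case: eqP => // mj; by rewrite mj jr in mr.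
Qed.

Section Graded.
Variables (K : numFieldType) (V : lmodType K) (hom : int -> V -> Prop).
Hypothesis gr : graded hom.

Lemma hom0 k : hom k 0. Proof. by case: (gr.1 k). Qed.
Lemma homC k (a : K) x y : hom k x -> hom k y -> hom k (a *: x + y).
Proof. by case: (gr.1 k) => _; apply. Qed.
Lemma homD k x y : hom k x -> hom k y -> hom k (x + y).
Proof. by move=> hx hy; have := homC 1 hx hy; rewrite scale1r. Qed.
Lemma homZ k (a : K) x : hom k x -> hom k (a *: x).
Proof. by move=> hx; have := homC a hx (hom0 k); rewrite addr0. Qed.
Lemma homN k x : hom k x -> hom k (- x).
Proof. by move=> hx; have := homZ (-1) hx; rewrite scaleN1r. Qed.
Lemma homB k x y : hom k x -> hom k y -> hom k (x - y).
Proof. by move=> hx hy; apply: homD hx (homN hy). Qed.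
Lemma homS k (s : seq int) (F : int -> V) :
  (forall i, i \in s -> hom k (F i)) -> hom k (\sum_(i <- s) F i).
Proof.
elim: s => [|i s IH] H; first by rewrite big_nil; exact: hom0.
rewrite big_cons; apply: homD; first by apply: H; rewrite inE eqxx.
by apply: IH => j js; apply: H; rewrite inE js orbT.
Qed.

Definition Rep v (r : seq int) (g : int -> V) :=
  [/\ uniq r, (forall j, hom j (g j)), (forall j, j \notin r -> g j = 0)
    & v = \sum_(j <- r) g j].

Lemma Rep_comb (a : K) v w r g r' g' : Rep v r g -> Rep w r' g' ->
  Rep (a *: v + w) (undup (r ++ r')) (fun j => a *: g j + g' j).
Proof.
move=> [ur hg zg ->] [ur' hg' zg' ->]; split.
- exact: undup_uniq.
- by move=> j; apply: homC.
- move=> j; rewrite mem_undup mem_cat negb_or => /andP[jr jr'].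
  by rewrite zg // zg' // scaler0 addr0.
rewrite big_split /= -scaler_sumr.
rewrite (@sum_sub _ r (undup (r ++ r')) g) ?undup_uniq //; last 2 first.
- by move=> k kr; rewrite mem_undup mem_cat kr.
- by move=> k _ /zg.
rewrite (@sum_sub _ r' (undup (r ++ r')) g') ?undup_uniq //.
- by move=> k kr; rewrite mem_undup mem_cat kr orbT.
- by move=> k _ /zg'.
Qed.

Lemma Rep_single k x : hom k x -> Rep x [:: k] (fun j => if j == k then x else 0).
Proof.
move=> hx; split => //.
- by move=> j; case: eqP => [->|_]; [exact: hx | exact: hom0].
- by move=> j; rewrite inE => /negbTE->.
by rewrite big_seq1 eqxx.
Qed.

Lemma Rep_ex v : exists rg : seq int * (int -> V), Rep v rg.1 rg.2.
Proof.
have [s [f [Hf ->]]] := gr.2.1 v.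
elim: s Hf => [|i s IH] Hf.
  by exists ([::], fun _ => 0); split => //; try exact: hom0; rewrite !big_nil.
have [[r g] /= Hr] := IH (fun k ks => Hf k (mem_behead (s:=i::s) ks)).
have hi : hom i (f i) by case: (Hf i (mem_head _ _)).
have := Rep_comb 1 (Rep_single hi) Hr.
rewrite scale1r big_cons => H; by eexists (_, _); exact: H.
Qed.

Lemma Rep_uniq v r g r' g' : Rep v r g -> Rep v r' g' -> g =1 g'.
Proof.
move=> [ur hg zg ev] [ur' hg' zg' ev'] j.
set t := undup (r ++ r').
have H := gr.2.2 t (fun j => g j - g' j) (undup_uniq _) (fun k _ => homB (hg k) (hg' k)).
case jt: (j \in t); last first.
  move: jt; rewrite mem_undup mem_cat => /negbT; rewrite negb_or => /andP[a b].
  by rewrite zg // zg'.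
apply/eqP; rewrite -subr_eq0; apply/eqP; apply: H jt.
rewrite sumrB (@sum_sub _ r t g) ?undup_uniq //; last 2 first.
- by move=> k kr; rewrite mem_undup mem_cat kr.
- by move=> k _ /zg.
rewrite (@sum_sub _ r' t g') ?undup_uniq //.
- by rewrite -ev -ev' subrr.
- by move=> k kr; rewrite mem_undup mem_cat kr orbT.
- by move=> k _ /zg'.
Qed.

Definition grepr v := proj1_sig (constructive_indefinite_description _ (Rep_ex v)).
Definition gcomp k v := (grepr v).2 k.
Definition gsupp v := (grepr v).1.
Lemma compRep v : Rep v (gsupp v) (gcomp^~ v).
Proof. exact: (proj2_sig (constructive_indefinite_description _ (Rep_ex v))). Qed.
Lemma compE v r g : Rep v r g -> forall k, gcomp k v = g k.
Proof. move=> H k; exact: (Rep_uniq (compRep v) H). Qed.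

Lemma comp_hom k v : hom k (gcomp k v). Proof. by case: (compRep v). Qed.
Lemma comp_lin k (a : K) v w : gcomp k (a *: v + w) = a *: gcomp k v + gcomp k w.
Proof. exact: compE (Rep_comb a (compRep v) (compRep w)) k. Qed.
Lemma comp0 k : gcomp k 0 = 0.
Proof.
have H : Rep 0 [::] (fun _ => 0) by split => //; try exact: hom0; rewrite big_nil.
exact: compE H k.
Qed.
Lemma compD k v w : gcomp k (v + w) = gcomp k v + gcomp k w.
Proof. by have := comp_lin k 1 v w; rewrite !scale1r. Qed.
Lemma compZ k a v : gcomp k (a *: v) = a *: gcomp k v.
Proof. by have := comp_lin k a v 0; rewrite !addr0 comp0 addr0. Qed.
Lemma compN k v : gcomp k (- v) = - gcomp k v.
Proof. by rewrite -scaleN1r compZ scaleN1r. Qed.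
Lemma compB k v w : gcomp k (v - w) = gcomp k v - gcomp k w.
Proof. by rewrite compD compN. Qed.
Lemma comp_homog k j x : hom j x -> gcomp k x = if k == j then x else 0.
Proof. move=> hx; exact: compE (Rep_single hx) k. Qed.
Lemma comp_id k x : hom k x -> gcomp k x = x.
Proof. by move=> hx; rewrite (comp_homog k hx) eqxx. Qed.
Lemma comp_big k (s : seq int) (F : int -> V) :
  gcomp k (\sum_(i <- s) F i) = \sum_(i <- s) gcomp k (F i).
Proof.
elim: s => [|i s IH]; first by rewrite !big_nil comp0.
by rewrite !big_cons compD IH.
Qed.
Lemma comp_sum v r : uniq r -> (forall k, k \notin r -> gcomp k v = 0) ->
  v = \sum_(k <- r) gcomp k v.
Proof.
move=> ur zr; have [us _ zs ev] := compRep v.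
set t := undup (gsupp v ++ r).
rewrite [LHS]ev -(@sum_sub _ _ t) ?undup_uniq //; last 2 first.
- by move=> k ks; rewrite mem_undup mem_cat ks.
- by move=> k _ /zs.
rewrite (@sum_sub _ r t) ?undup_uniq //.
- by move=> k ks; rewrite mem_undup mem_cat ks orbT.
- by move=> k _ /zr.
Qed.
Lemma supp_uniq v : uniq (gsupp v). Proof. by case: (compRep v). Qed.
Lemma supp_zero v k : k \notin gsupp v -> gcomp k v = 0.
Proof. by case: (compRep v) => _ _ H _; apply: H. Qed.
Lemma comp_decomp v : v = \sum_(k <- gsupp v) gcomp k v.
Proof. exact: comp_sum (supp_uniq v) (@supp_zero v). Qed.

Lemma span_ofP (Q : int -> bool) v :
  span_of Q hom v <-> (forall k, ~~ Q k -> gcomp k v = 0).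
Proof.
split.
  move=> [s [f [Hf ->]]] k nQ; rewrite comp_big big1_seq // => i /andP[_ si].
  have [Qi hi] := Hf i si; rewrite (comp_homog k hi); case: eqP => // ki.
  by rewrite ki Qi in nQ.
move=> H; exists (filter Q (gsupp v)), (gcomp^~ v); split.
  by move=> k; rewrite mem_filter => /andP[Qk _]; split => //; apply: comp_hom.
apply: comp_sum; first by rewrite filter_uniq // supp_uniq.
move=> k; rewrite mem_filter negb_and; case Qk: (Q k) => /= ks; first by apply: supp_zero.
by apply: H; rewrite Qk.
Qed.

Lemma span_hom (Q : int -> bool) k x : Q k -> hom k x -> span_of Q hom x.
Proof. move=> Qk hx; exists [:: k], (fun _ => x); split; first by move=> j; rewrite inE => /eqP->.
by rewrite big_seq1. Qed.

Lemma hom_uniq k j x : hom k x -> hom j x -> k != j -> x = 0.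
Proof. by move=> hk hj kj; rewrite -(comp_id hk) (comp_homog k hj) (negbTE kj). Qed.

End Graded.


Section Lie.
Variables (K : numFieldType) (V : lmodType K) (hom : int -> V -> Prop) (br : V -> V -> V).
Hypothesis L : is_lie_super hom br.
Definition Lgr := L.1.

Lemma brCl (a : K) x y z : br (a *: x + y) z = a *: br x z + br y z.
Proof. by case: L => _ [H _]; apply: H. Qed.
Lemma brCr (a : K) x y z : br z (a *: x + y) = a *: br z x + br z y.
Proof. by case: L => _ [_ [H _]]; apply: H. Qed.
Lemma brDl x y z : br (x + y) z = br x z + br y z.
Proof. by have := brCl 1 x y z; rewrite !scale1r. Qed.
Lemma brDr x y z : br z (x + y) = br z x + br z y.
Proof. by have := brCr 1 x y z; rewrite !scale1r. Qed.
Lemma br0l z : br 0 z = 0.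
Proof. have := brDl 0 0 z; rewrite addr0 => H; apply: (addrI (br 0 z)); by rewrite addr0 -H. Qed.
Lemma br0r z : br z 0 = 0.
Proof. have := brDr 0 0 z; rewrite addr0 => H; apply: (addrI (br z 0)); by rewrite addr0 -H. Qed.
Lemma brZl a x z : br (a *: x) z = a *: br x z.
Proof. by have := brCl a x 0 z; rewrite !addr0 br0l addr0. Qed.
Lemma brZr a x z : br z (a *: x) = a *: br z x.
Proof. by have := brCr a x 0 z; rewrite !addr0 br0r addr0. Qed.
Lemma brNl x z : br (- x) z = - br x z.
Proof. by rewrite -scaleN1r brZl scaleN1r. Qed.
Lemma brNr x z : br z (- x) = - br z x.
Proof. by rewrite -scaleN1r brZr scaleN1r. Qed.
Lemma brBl x y z : br (x - y) z = br x z - br y z.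
Proof. by rewrite brDl brNl. Qed.
Lemma brBr x y z : br z (x - y) = br z x - br z y.
Proof. by rewrite brDr brNr. Qed.
Lemma br_suml (I : Type) (s : seq I) (F : I -> V) z :
  br (\sum_(i <- s) F i) z = \sum_(i <- s) br (F i) z.
Proof. elim: s => [|i s IH]; by rewrite ?big_nil ?br0l // !big_cons brDl IH. Qed.
Lemma br_sumr (I : Type) (s : seq I) (F : I -> V) z :
  br z (\sum_(i <- s) F i) = \sum_(i <- s) br z (F i).
Proof. elim: s => [|i s IH]; by rewrite ?big_nil ?br0r // !big_cons brDr IH. Qed.
Lemma br_deg (a b : int) x y : hom a x -> hom b y -> hom (a + b) (br x y).
Proof. by case: L => _ [_ [_ [H _]]]; apply: H. Qed.
Lemma br_anti (a b : int) x y : hom a x -> hom b y ->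
  br x y = - ((-1 : K) ^ (a * b) *: br y x).
Proof. by case: L => _ [_ [_ [_ [H _]]]]; apply: H. Qed.
Lemma br_jac (a b : int) x y z : hom a x -> hom b y ->
  br x (br y z) = br (br x y) z + (-1 : K) ^ (a * b) *: br y (br x z).
Proof. by case: L => _ [_ [_ [_ [_ H]]]]; apply: H. Qed.

Lemma span_add (Q : int -> bool) (a : K) x y : span_of Q hom x -> span_of Q hom y ->
  span_of Q hom (a *: x + y).
Proof.
move=> /(span_ofP Lgr) hx /(span_ofP Lgr) hy; apply/(span_ofP Lgr) => k nQ.
by rewrite comp_lin hx // hy // scaler0 addr0.
Qed.
Lemma span0 (Q : int -> bool) : span_of Q hom 0.
Proof. by apply/(span_ofP Lgr) => k _; rewrite comp0. Qed.
Lemma span_big (Q : int -> bool) (I : eqType) (s : seq I) (F : I -> V) :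
  (forall i, i \in s -> span_of Q hom (F i)) -> span_of Q hom (\sum_(i <- s) F i).
Proof.
elim: s => [|i s IH] H; first by rewrite big_nil; apply: span0.
rewrite big_cons -[F i]scale1r; apply: span_add; first by apply: H; rewrite inE eqxx.
by apply: IH => j js; apply: H; rewrite inE js orbT.
Qed.

Lemma span_pos_br x y : span_of pos hom x -> span_of pos hom y -> span_of pos hom (br x y).
Proof.
move=> sx sy; have zx := (span_ofP Lgr _ _).1 sx; have zy := (span_ofP Lgr _ _).1 sy.
rewrite (comp_decomp Lgr x) (comp_decomp Lgr y) br_suml; apply: span_big => i _.
rewrite br_sumr; apply: span_big => j _.
case: (boolP (pos i)) => pi; last by rewrite zx // br0l; apply: span0.
case: (boolP (pos j)) => pj; last by rewrite zy // br0r; apply: span0.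
apply: (span_hom (k := i + j)); last by apply: br_deg; apply: comp_hom.
by move: pi pj; rewrite /pos; lia.
Qed.
End Lie.


Section SubW.
Variables (K : numFieldType) (V : lmodType K) (P : V -> Prop).
Variable (h0 : P 0) (h : forall (a : K) x y, P x -> P y -> P (a *: x + y)).
Definition Pb : pred V := fun v => `[< P v >].
Definition Wt : Type := let _ := (h0, h) in {v : V | Pb v}.
HB.instance Definition _ := Choice.on Wt.
Lemma Pb0 : Pb 0. Proof. by apply/asboolP. Qed.
Definition w0 : Wt := exist (fun v => Pb v) 0 Pb0.
Lemma PbC a (x y : Wt) : Pb (a *: val x + val y).
Proof. apply/asboolP; apply: h; apply/asboolP; [exact: (valP x) | exact: (valP y)]. Qed.
Definition wadd (x y : Wt) : Wt := exist (fun v => Pb v) _ (PbC 1 x y).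
Definition wopp (x : Wt) : Wt := exist (fun v => Pb v) _ (PbC (-1) x w0).
Definition wscale (a : K) (x : Wt) : Wt := exist (fun v => Pb v) _ (PbC a x w0).
Lemma waddA : associative wadd.
Proof. move=> x y z; apply: val_inj => /=; rewrite !scale1r; exact: addrA. Qed.
Lemma waddC : commutative wadd.
Proof. move=> x y; apply: val_inj => /=; rewrite !scale1r; exact: addrC. Qed.
Lemma wadd0 : left_id w0 wadd.
Proof. move=> x; apply: val_inj => /=; by rewrite scale1r add0r. Qed.
Lemma waddN : left_inverse w0 wopp wadd.
Proof. move=> x; apply: val_inj => /=; by rewrite scale1r addr0 scaleN1r addNr. Qed.
HB.instance Definition _ := GRing.isZmodule.Build Wt waddA waddC wadd0 waddN.
Lemma wscaleA a b (x : Wt) : wscale a (wscale b x) = wscale (a * b) x.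
Proof. apply: val_inj => /=; by rewrite !addr0 scalerA. Qed.
Lemma wscale1 : left_id 1 wscale.
Proof. move=> x; apply: val_inj => /=; by rewrite addr0 scale1r. Qed.
Lemma wscaleDr : right_distributive wscale +%R.
Proof. move=> a x y; apply: val_inj => /=; by rewrite !addr0 !scale1r scalerDr. Qed.
Lemma wscaleDl v : {morph wscale^~ v : a b / a + b}.
Proof. move=> a b; apply: val_inj => /=; by rewrite !addr0 !scale1r scalerDl. Qed.
HB.instance Definition _ := GRing.Zmodule_isLmodule.Build K Wt wscaleA wscale1 wscaleDr wscaleDl.
Lemma val_lin a (x y : Wt) : val (a *: x + y) = a *: val x + val y.
Proof. by rewrite /= scale1r addr0. Qed.
Lemma valD (x y : Wt) : val (x + y) = val x + val y.
Proof. by rewrite /= scale1r. Qed.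
Lemma valZ a (x : Wt) : val (a *: x) = a *: val x.
Proof. by rewrite /= addr0. Qed.
Lemma val0 : val (0 : Wt) = 0. Proof. by []. Qed.
Lemma val_sum (I : Type) (s : seq I) (F : I -> Wt) : val (\sum_(i <- s) F i) = \sum_(i <- s) val (F i).
Proof. elim: s => [|i s IH]; first by rewrite !big_nil. by rewrite !big_cons -[_ + _]/(wadd _ _) /= scale1r IH. Qed.
Definition mkW (v : V) (pv : P v) : Wt := exist (fun v => Pb v) v (introT (asboolP _) pv).
Lemma val_P (x : Wt) : P (val x). Proof. apply/asboolP; exact: (valP x). Qed.
End SubW.



Section Main.
Variables (K : numFieldType)
  (VG : lmodType K) (homG : int -> VG -> Prop) (brG : VG -> VG -> VG)
  (VU : lmodType K) (homU : int -> VU -> Prop) (brU : VU -> VU -> VU)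
  (iota : VG -> VU) (pi : VU -> VG) (rho : VG -> VU)
  (p : nat) (T : nat -> VU -> Prop).
Hypothesis LG : is_lie_super homG brG.
Hypothesis Hptr : pos_zero_trans homG brG.
Hypothesis Hgen : forall v, span_of pos homG v <-> gen_sub brG (homG 1) v.
Hypothesis LU : is_lie_super homU brU.
Hypothesis Hiota_lin : lin_on (homG 1) iota.
Hypothesis Hiota_hom : forall g, homG 1 g -> homU 1 (iota g).
Hypothesis Hiota_inj : forall g g', homG 1 g -> homG 1 g' -> iota g = iota g' -> g = g'.
Hypothesis Hiota_surj : forall u, homU 1 u -> exists g, homG 1 g /\ iota g = u.
Hypothesis Huniv : universal_neg homU brU.
Hypothesis Hfree : free_pos homU brU.
Hypothesis Hpi : lie_mor_pos homU brU homG brG pi.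
Hypothesis Hpi_iota : forall g, homG 1 g -> pi (iota g) = g.
Hypothesis Hrho1 : forall g, homG 1 g -> rho g = iota g.
Hypothesis Hrho : forall (k : nat) x, homG (- k%:Z) x ->
     homU (- k%:Z) (rho x) /\
     forall g, homG 1 g -> brU (rho x) (iota g) = rho (brG x g).
Hypothesis HT : forall k, (k <= p)%N -> subspace (T k) /\ (forall x, T k x -> homU (- k%:Z) x).
Hypothesis HTrho : forall k x, (k <= p)%N -> homG (- k%:Z) x -> T k (rho x).
Hypothesis HTbr : forall k x u, (k <= p)%N -> T k x -> homU 1 u ->
     if k is k'.+1 then T k' (brU x u) else homU 1 (brU x u).
Hypothesis HTD : forall k x d, (k <= p)%N -> T k x -> inD homU pi d -> inD homU pi (brU x d).

Let grG := Lgr LG.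
Let grU := Lgr LU.
Local Notation compG := (gcomp grG).
Local Notation compU := (gcomp grU).
Local Notation spU := (span_of pos homU).
Local Notation spG := (span_of pos homG).
Local Notation D := (inD homU pi).

Lemma pi_lin a x y : spU x -> spU y -> pi (a *: x + y) = a *: pi x + pi y.
Proof. by case: Hpi => H _; apply: H. Qed.
Lemma sp0U : spU 0. Proof. exact: span0 LU _. Qed.
Lemma pi0 : pi 0 = 0.
Proof. have := pi_lin 1 sp0U sp0U; rewrite !scale1r addr0 => H; apply: (addrI (pi 0)); by rewrite addr0 -H. Qed.
Lemma piD x y : spU x -> spU y -> pi (x + y) = pi x + pi y.
Proof. by move=> hx hy; have := pi_lin 1 hx hy; rewrite !scale1r. Qed.
Lemma piZ a x : spU x -> pi (a *: x) = a *: pi x.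
Proof. by move=> hx; have := pi_lin a hx sp0U; rewrite !addr0 pi0 addr0. Qed.
Lemma piB x y : spU x -> spU y -> pi (x - y) = pi x - pi y.
Proof.
move=> hx hy; rewrite -scaleN1r addrC pi_lin // ?piZ // scaleN1r addrC //.
Qed.
Lemma pi_hom (k : int) v : 0 < k -> homU k v -> homG k (pi v).
Proof. by case: Hpi => _ [H _]; apply: H. Qed.
Lemma pi_br x y : spU x -> spU y -> pi (brU x y) = brG (pi x) (pi y).
Proof. by case: Hpi => _ [_ H]; apply: H. Qed.
Lemma spU_hom (k : int) v : 0 < k -> homU k v -> spU v.
Proof. by move=> k0 hv; apply: (span_hom (k := k)). Qed.
Lemma pi_sum (s : seq int) (F : int -> VU) : (forall i, i \in s -> spU (F i)) ->
  pi (\sum_(i <- s) F i) = \sum_(i <- s) pi (F i).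
Proof.
elim: s => [|i s IH] H; first by rewrite !big_nil pi0.
rewrite !big_cons piD ?IH //; first by move=> j js; apply: H; rewrite inE js orbT.
  by apply: H; rewrite inE eqxx.
by apply: (span_big LU) => j js; apply: H; rewrite inE js orbT.
Qed.
Lemma pi_comp u (m : int) : spU u -> 0 < m -> pi (compU m u) = compG m (pi u).
Proof.
move=> su m0; have zu := (span_ofP grU _ _).1 su.
rewrite {2}(comp_decomp grU u) pi_sum; last first.
  move=> i _; case: (boolP (pos i)) => posi; last by rewrite zu //; apply: sp0U.
  by apply: (spU_hom posi); apply: comp_hom.
rewrite comp_big.
have -> : \sum_(i <- gsupp grU u) compG m (pi (compU i u)) =
          \sum_(i <- gsupp grU u) (if m == i then pi (compU i u) else 0).
  apply: eq_bigr => i _; case: (boolP (pos i)) => posi; last first.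
    by rewrite zu // pi0 comp0; case: eqP.
  by rewrite (comp_homog grG m (pi_hom posi (comp_hom _ _ _))).
rewrite sum_pick ?supp_uniq //; case: ifP => // /negbT /(@supp_zero _ _ _ grU) ->.
exact: pi0.
Qed.

Lemma D0 : D 0. Proof. by split; [apply: sp0U | apply: pi0]. Qed.
Lemma DC a x y : D x -> D y -> D (a *: x + y).
Proof. move=> [sx px] [sy py]; split; first exact: (span_add LU).
by rewrite pi_lin // px py scaler0 addr0. Qed.
Lemma DD x y : D x -> D y -> D (x + y).
Proof. by move=> dx dy; have := DC 1 dx dy; rewrite scale1r. Qed.
Lemma DZ a x : D x -> D (a *: x).
Proof. by move=> dx; have := DC a dx D0; rewrite addr0. Qed.
Lemma DN x : D x -> D (- x).
Proof. by move=> dx; have := DZ (-1) dx; rewrite scaleN1r. Qed.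
Lemma DB x y : D x -> D y -> D (x - y).
Proof. by move=> dx dy; apply: DD dx (DN dy). Qed.
Lemma Dsum (I : eqType) (s : seq I) (F : I -> VU) : (forall i, i \in s -> D (F i)) ->
  D (\sum_(i <- s) F i).
Proof.
elim: s => [|i s IH] H; first by rewrite big_nil; apply: D0.
rewrite big_cons; apply: DD; first by apply: H; rewrite inE eqxx.
by apply: IH => j js; apply: H; rewrite inE js orbT.
Qed.
Lemma Dhom (k : int) d : 0 < k -> homU k d -> pi d = 0 -> D d.
Proof. by move=> k0 hd pd; split => //; apply: spU_hom hd. Qed.


Lemma homGe (a b : int) x : a = b -> homG a x -> homG b x. Proof. by move->. Qed.
Lemma homUe (a b : int) x : a = b -> homU a x -> homU b x. Proof. by move->. Qed.

Lemma rho_deg (k : nat) x : homG (- k%:Z) x -> homU (- k%:Z) (rho x).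
Proof. by move/Hrho=> []. Qed.
Lemma rho_br (k : nat) x g : homG (- k%:Z) x -> homG 1 g -> brU (rho x) (iota g) = rho (brG x g).
Proof. by move/Hrho=> [_ H]; apply: H. Qed.
Lemma brG1 (k : nat) x g : homG (- k%:Z) x -> homG 1 g -> homG (1 - k%:Z) (brG x g).
Proof. move=> hx hg; apply: homGe (br_deg LG hx hg); lia. Qed.
Lemma brU1 (k : nat) x u : homU (- k%:Z) x -> homU 1 u -> homU (1 - k%:Z) (brU x u).
Proof. move=> hx hg; apply: homUe (br_deg LU hx hg); lia. Qed.

Lemma univ_inj (k : nat) x : homU (- k%:Z) x ->
  (forall g, homG 1 g -> brU x (iota g) = 0) -> x = 0.
Proof.
move=> hx H; apply: ((Huniv k).1 x hx) => u hu.
by have [g [hg <-]] := Hiota_surj hu; apply: H.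
Qed.

Lemma rho_lin1 : lin_on (homG 1) rho.
Proof.
move=> a x y hx hy; rewrite !Hrho1 //; first exact: Hiota_lin.
exact: (homC grG).
Qed.

Lemma rho_lin (k : nat) : lin_on (homG (- k%:Z)) rho.
Proof.
elim: k => [|k IH] a x y hx hy.
- apply/eqP; rewrite -subr_eq0; apply/eqP; apply: (univ_inj (k := 0)).
    apply: (homB grU); first by apply: (rho_deg (k := 0)); apply: (homC grG).
    by apply: (homC grU); apply: (rho_deg (k := 0)).
  move=> g hg; rewrite (brBl LU) (brDl LU) (brZl LU) !(rho_br (k := 0)) //; last exact: (homC grG).
  have h1 : homG 1 (brG x g) by apply: homGe (brG1 hx hg); lia.
  have h2 : homG 1 (brG y g) by apply: homGe (brG1 hy hg); lia.
  by rewrite (brCl LG) rho_lin1 ?subrr.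
- apply/eqP; rewrite -subr_eq0; apply/eqP; apply: (univ_inj (k := k.+1)).
    apply: (homB grU); first by apply: (rho_deg (k := k.+1)); apply: (homC grG).
    by apply: (homC grU); apply: (rho_deg (k := k.+1)).
  move=> g hg; rewrite (brBl LU) (brDl LU) (brZl LU) !(rho_br (k := k.+1)) //; last exact: (homC grG).
  have h1 : homG (- k%:Z) (brG x g) by apply: homGe (brG1 hx hg); lia.
  have h2 : homG (- k%:Z) (brG y g) by apply: homGe (brG1 hy hg); lia.
  by rewrite (brCl LG) IH ?subrr.
Qed.

Lemma rho_linz (d : int) : d <= 1 -> lin_on (homG d) rho.
Proof.
move=> d1; case: (boolP (d == 1)) => [/eqP->|d1']; first exact: rho_lin1.
have -> : d = - (`|d|%N)%:Z by lia.
exact: rho_lin.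
Qed.

Lemma rho0 : rho 0 = 0.
Proof.
have := rho_lin1 1 (hom0 grG 1) (hom0 grG 1); rewrite !scale1r addr0 => H.
by apply: (addrI (rho 0)); rewrite addr0 -H.
Qed.
Lemma rhoZ (d : int) a x : d <= 1 -> homG d x -> rho (a *: x) = a *: rho x.
Proof. move=> d1 hx; have := rho_linz d1 a hx (hom0 grG d); by rewrite !addr0 rho0 addr0. Qed.
Lemma rhoD (d : int) x y : d <= 1 -> homG d x -> homG d y -> rho (x + y) = rho x + rho y.
Proof. move=> d1 hx hy; have := rho_linz d1 1 hx hy; by rewrite !scale1r. Qed.
Lemma rhoB (d : int) x y : d <= 1 -> homG d x -> homG d y -> rho (x - y) = rho x - rho y.
Proof.
move=> d1 hx hy; rewrite (rhoD d1 hx (homN grG hy)) -scaleN1r (rhoZ _ d1 hy) scaleN1r //.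
Qed.

Section RhoRho.
Variables (i j : nat).
Hypothesis IH : forall (i' j' : nat) a' b', (i' + j' < i + j)%N -> homG (- i'%:Z) a' ->
  homG (- j'%:Z) b' -> brU (rho a') (rho b') = rho (brG a' b').

Lemma rr_aux (i0 j0 : nat) a b g : (i0 + j0 = i + j)%N -> homG (- i0%:Z) a -> homG (- j0%:Z) b -> homG 1 g ->
  brU (rho a) (rho (brG b g)) = rho (brG a (brG b g)).
Proof.
move=> e ha hb hg; case: j0 e hb => [|j0] e hb.
  have h1 : homG 1 (brG b g) by apply: homGe (brG1 hb hg); lia.
  by rewrite (Hrho1 h1) (rho_br ha).
have h1 : homG (- j0%:Z) (brG b g) by apply: homGe (brG1 hb hg); lia.
apply: (IH (i' := i0) (j' := j0) _ ha h1); lia.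
Qed.

Lemma rr_step a b : homG (- i%:Z) a -> homG (- j%:Z) b -> brU (rho a) (rho b) = rho (brG a b).
Proof.
move=> ha hb.
have hab : homG (- (i + j)%N%:Z) (brG a b) by apply: homGe (br_deg LG ha hb); lia.
apply/eqP; rewrite -subr_eq0; apply/eqP; apply: (univ_inj (k := (i + j)%N)).
  apply: (homB grU); last exact: rho_deg.
  by apply: homUe (br_deg LU (rho_deg ha) (rho_deg hb)); lia.
move=> g hg; rewrite (brBl LU) (rho_br hab hg).
have JU := br_jac LU (iota g) (rho_deg ha) (rho_deg hb).
have JG := br_jac LG g ha hb.
set s := (-1 : K) ^ (- i%:Z * - j%:Z) in JU JG.
have -> : brU (brU (rho a) (rho b)) (iota g) =
   brU (rho a) (brU (rho b) (iota g)) - s *: brU (rho b) (brU (rho a) (iota g)).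
  by rewrite JU addrK.
have -> : brG (brG a b) g = brG a (brG b g) - s *: brG b (brG a g) by rewrite JG addrK.
rewrite (rho_br hb hg) (rho_br ha hg) (rr_aux (i0 := i) (j0 := j)) //.
rewrite (rr_aux (i0 := j) (j0 := i)) //; last by rewrite addnC.
have h1 : homG (1 - (i + j)%N%:Z) (brG a (brG b g)).
  by apply: homGe (br_deg LG ha (brG1 hb hg)); lia.
have h2 : homG (1 - (i + j)%N%:Z) (brG b (brG a g)).
  by apply: homGe (br_deg LG hb (brG1 ha hg)); lia.
have d1 : 1 - (i + j)%N%:Z <= 1 by lia.
by rewrite (rhoB d1 h1 (homZ grG _ h2)) (rhoZ _ d1 h2) subrr.
Qed.
End RhoRho.

Lemma rho_rho (i j : nat) a b : homG (- i%:Z) a -> homG (- j%:Z) b ->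
  brU (rho a) (rho b) = rho (brG a b).
Proof.
have H : forall n (i j : nat) a b, (i + j <= n)%N -> homG (- i%:Z) a -> homG (- j%:Z) b ->
  brU (rho a) (rho b) = rho (brG a b).
  elim=> [|n IHn] i0 j0 a0 b0 Hn; apply: rr_step => i' j' a' b' Hl; [exfalso; lia | apply: IHn; lia].
exact: (H (i + j)%N).
Qed.


Inductive inA : nat -> VU -> Prop :=
| A0 m : inA m.+1 0
| A1 u : homU 1 u -> inA 1 u
| Alin m c y z : inA m y -> inA m z -> inA m (c *: y + z)
| Abr a b y z : inA a y -> inA b z -> inA (a + b) (brU y z).

Lemma inA_hom m y : inA m y -> homU m%:Z y /\ (0 < m)%N.
Proof.
elim=> {m y} [m|u hu|m c y z _ [hy m0] _ [hz _]|a b y z _ [hy a0] _ [hz b0]].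
- by split => //; apply: (hom0 grU).
- by [].
- by split => //; apply: (homC grU).
- split; last by rewrite addn_gt0 a0.
  by apply: homUe (br_deg LU hy hz); lia.
Qed.

Lemma inA_sum (m : nat) (I : eqType) (s : seq I) (F : I -> VU) : (0 < m)%N ->
  (forall i, i \in s -> inA m (F i)) -> inA m (\sum_(i <- s) F i).
Proof.
case: m => // m _; elim: s => [|i s IH] H; first by rewrite big_nil; apply: A0.
rewrite big_cons -[F i]scale1r; apply: Alin; first by apply: H; rewrite inE eqxx.
by apply: IH => j js; apply: H; rewrite inE js orbT.
Qed.

Definition AS v := spU v /\ forall k : nat, (0 < k)%N -> inA k (compU k%:Z v).
Lemma AS0 : AS 0.
Proof. split; first exact: sp0U. by case=> // k _; rewrite comp0; apply: A0. Qed.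
Lemma ASC (a : K) x y : AS x -> AS y -> AS (a *: x + y).
Proof.
move=> [sx Hx] [sy Hy]; split; first exact: (span_add LU).
by move=> k k0; rewrite comp_lin; apply: Alin; [apply: Hx | apply: Hy].
Qed.

Lemma AS_comp v (k : int) : AS v -> AS (compU k v).
Proof.
move=> [sv Hv]; have zv := (span_ofP grU _ _).1 sv.
case: (boolP (pos k)) => pk; last by rewrite zv //; apply: AS0.
split; first by apply: (spU_hom pk); apply: (comp_hom grU).
move=> j j0; rewrite (comp_homog grU _ (comp_hom grU k v)); case: eqP => [e|_].
  by rewrite -e; apply: Hv.
by case: j j0 => // j _; apply: A0.
Qed.

Lemma AS_hom1 u : homU 1 u -> AS u.
Proof.
move=> hu; split; first by apply: (@spU_hom 1).
move=> j j0; rewrite (comp_homog grU _ hu); case: eqP => [e|_].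
  have -> : j = 1%N by lia.
  by apply: A1.
by case: j j0 => // j _; apply: A0.
Qed.

Lemma AS_br v w : AS v -> AS w -> AS (brU v w).
Proof.
move=> [sv Hv] [sw Hw]; split; first exact: (span_pos_br LU).
have zv := (span_ofP grU _ _).1 sv; have zw := (span_ofP grU _ _).1 sw.
move=> k k0; rewrite (comp_decomp grU v) (comp_decomp grU w) (br_suml LU) comp_big.
apply: inA_sum => // i _; rewrite (br_sumr LU) comp_big; apply: inA_sum => // j _.
case: (boolP (pos i)) => posi; last by rewrite zv // (br0l LU) comp0; case: k k0 => // k _; apply: A0.
case: (boolP (pos j)) => posj; last by rewrite zw // (br0r LU) comp0; case: k k0 => // k _; apply: A0.
rewrite (comp_homog grU _ (br_deg LU (comp_hom grU i v) (comp_hom grU j w))).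
case: eqP => [e|_]; last by case: k k0 => // k _; apply: A0.
have -> : k = (`|i| + `|j|)%N by move: posi posj; rewrite /pos; lia.
have -> : i = (`|i|%N)%:Z by move: posi; rewrite /pos; lia.
have -> : j = (`|j|%N)%:Z by move: posj; rewrite /pos; lia.
apply: Abr; [apply: Hv | apply: Hw]; move: posi posj; rewrite /pos; lia.
Qed.

Section WW.
Let W := Wt AS0 ASC.
Let homW (k : int) (w : W) := homU k (val w).
Let vP (x : W) : AS (val x) := @val_P _ _ _ AS0 ASC x.
Let brW (x y : W) : W := mkW AS0 ASC (AS_br (vP x) (vP y)).

Let E x y : val (brW x y) = brU (val x) (val y). Proof. by []. Qed.
Lemma LW : is_lie_super homW brW.
Proof.
split; last split; last split; last split; last split.
- split; last split.
  + move=> k; split; first exact: (hom0 grU).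
    by move=> a x y hx hy; rewrite /homW val_lin; apply: (homC grU).
  + move=> w; exists (gsupp grU (val w)), (fun k => mkW AS0 ASC (AS_comp k (vP w))).
    split; first by move=> k _; split => //; apply: (comp_hom grU).
    apply: val_inj; rewrite val_sum /=; exact: comp_decomp.
  + move=> s f us hf s0 k ks; apply: val_inj; rewrite val0.
    apply: (grU.2.2 s (fun k => val (f k))) => //.
    by rewrite -val_sum s0.
- by move=> a x y z; apply: val_inj; rewrite !E !val_lin !E (brCl LU).
- by move=> a x y z; apply: val_inj; rewrite !E !val_lin !E (brCr LU).
- by move=> a b x y hx hy; rewrite /homW E; apply: (br_deg LU hx hy).
- move=> a b x y hx hy; apply: val_inj.
  rewrite E (br_anti LU hx hy) -scaleN1r -[X in _ = val X]addr0 val_lin val0 addr0.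
  by rewrite -[X in _ = _ *: val X]addr0 val_lin val0 addr0 E scaleN1r.
- move=> a b x y z hx hy; apply: val_inj.
  by rewrite !E (br_jac LU _ hx hy) valD valZ !E.
Qed.

Let fW (u : VU) : W :=
  match excluded_middle_informative (homU 1 u) with
  | left h => mkW AS0 ASC (AS_hom1 h)
  | right _ => 0
  end.
Lemma fWE u : homU 1 u -> val (fW u) = u.
Proof. by rewrite /fW; case: excluded_middle_informative. Qed.

Lemma spU_AS v : spU v -> AS v.
Proof.
move=> sv.
have lf : lin_on (homU 1) fW.
  move=> a x y hx hy; apply: val_inj; rewrite val_lin !fWE //; exact: (homC grU).
have hf : forall u, homU 1 u -> homW 1 (fW u) by move=> u hu; rewrite /homW fWE.
have [phi [[mphi ephi] _]] := Hfree LW lf hf.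
have lid : lin_on (homU 1) (@id VU) by [].
have [phi0 [_ uphi0]] := Hfree LU lid (fun u hu => hu).
have mg : lie_mor_pos homU brU homU brU (fun v => val (phi v)).
  case: mphi => l1 [l2 l3]; split; last split.
  - by move=> a x y hx hy; rewrite l1 // val_lin.
  - by move=> k w k0 hw; apply: l2.
  - by move=> x y hx hy; rewrite l3.
have mid : lie_mor_pos homU brU homU brU (@id VU) by split => //; split.
have e1 : val (phi v) = phi0 v.
  by apply: (uphi0 _ mg) => // u hu; rewrite ephi // fWE.
have e2 : v = phi0 v by apply: (uphi0 _ mid).
rewrite e2 -e1; exact: vP.
Qed.
End WW.

Lemma genU (m : nat) u : (0 < m)%N -> homU m%:Z u -> inA m u.
Proof.
move=> m0 hu; have [_ H] := spU_AS (spU_hom (k := m%:Z) ltac:(lia) hu).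
by have := H m m0; rewrite (comp_id grU).
Qed.


Lemma spG_hom (k : int) v : 0 < k -> homG k v -> spG v.
Proof. by move=> k0 hv; apply: (span_hom (k := k)). Qed.

Lemma pi_surj (m : int) y : 0 < m -> homG m y -> exists u, homU m u /\ pi u = y.
Proof.
move=> m0 hy.
have : exists u, spU u /\ pi u = y.
  have G := (Hgen y).1 (spG_hom m0 hy); apply: (G (fun y => exists u, spU u /\ pi u = y)).
  - split; first by exists 0; split; [exact: sp0U | exact: pi0].
    move=> a x1 x2 [u1 [s1 <-]] [u2 [s2 <-]]; exists (a *: u1 + u2); split.
      exact: (span_add LU).
    by rewrite pi_lin.
  - move=> g hg; exists (iota g); split; last exact: Hpi_iota.
    by apply: (@spU_hom 1) => //; apply: Hiota_hom.
  - move=> x1 x2 [u1 [s1 <-]] [u2 [s2 <-]]; exists (brU u1 u2); split.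
      exact: (span_pos_br LU).
    by rewrite pi_br.
move=> [u [su pu]]; exists (compU m u); split; first exact: comp_hom.
by rewrite pi_comp // pu (comp_id grG).
Qed.

Lemma inA_sp m y : inA m y -> spU y.
Proof. by move/inA_hom=> [hy m0]; apply: (spU_hom (k := m%:Z)) => //; lia. Qed.

Lemma trans_lem (n : nat) x : homG (- n%:Z) x -> (forall g, homG 1 g -> brG x g = 0) -> x = 0.
Proof.
move=> hx H.
have HA : forall m u, inA m u -> brG x (pi u) = 0.
  move=> m u; elim=> {m u} [m|u hu|m c y z Ay IHy Az IHz|a b y z Ay IHy Az IHz].
  - by rewrite pi0 (br0r LG).
  - by have [g [hg <-]] := Hiota_surj hu; rewrite Hpi_iota //; apply: H.
  - rewrite (pi_lin _ (inA_sp Ay) (inA_sp Az)).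
    by rewrite (brCr LG) IHy IHz scaler0 addr0.
  - rewrite (pi_br (inA_sp Ay) (inA_sp Az)).
    have hpy : homG a%:Z (pi y).
      by case: (inA_hom Ay) => hy a0; apply: pi_hom hy; lia.
    by rewrite (br_jac LG _ hx hpy) IHy IHz (br0l LG) (br0r LG) scaler0 addr0.
apply: Hptr; first by apply: (span_hom (k := - n%:Z)) => //; lia.
move=> y sy; have zy := (span_ofP grG _ _).1 sy.
rewrite (comp_decomp grG y) (br_suml LG) big1_seq // => k _.
case: (boolP (pos k)) => pk; last by rewrite zy // (br0l LG).
have [u [hu <-]] := pi_surj pk (comp_hom grG k y).
have hpu := pi_hom pk hu.
rewrite (br_anti LG hpu hx) (HA `|k|%N u); first by rewrite scaler0 oppr0.
have ek : k = `|k|%N%:Z by move: pk; rewrite /pos; lia.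
apply: genU; first by move: pk; rewrite /pos; lia.
by rewrite -ek.
Qed.

Lemma rho_inj (n : nat) x : homG (- n%:Z) x -> rho x = 0 -> x = 0.
Proof.
elim: n x => [|n IH] x hx rx; apply: (trans_lem hx) => g hg.
  have h1 : homG 1 (brG x g) by apply: homGe (brG1 hx hg); lia.
  apply: Hiota_inj => //; first exact: (hom0 grG).
  rewrite -(Hrho1 h1) -(rho_br hx hg) rx (br0l LU).
  have := Hiota_lin 1 (hom0 grG 1) (hom0 grG 1); rewrite !scale1r addr0 => E.
  by apply: (addrI (iota 0)); rewrite addr0 -E.
have h1 : homG (- n%:Z) (brG x g) by apply: homGe (brG1 hx hg); lia.
by apply: IH h1 _; rewrite -(rho_br hx hg) rx (br0l LU).
Qed.


Lemma spZ a x : spU x -> spU (a *: x).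
Proof. by move=> sx; have := span_add LU a sx sp0U; rewrite addr0. Qed.
Lemma piN x : spU x -> pi (- x) = - pi x.
Proof. by move=> sx; rewrite -scaleN1r piZ // scaleN1r. Qed.
Lemma pi_comb c A B : spU A -> spU B -> pi (A + c *: B) = pi A + c *: pi B.
Proof. by move=> sA sB; rewrite addrC pi_lin // addrC. Qed.
Lemma rho_comb (d : int) c A B : d <= 1 -> homG d A -> homG d B ->
  rho (A + c *: B) = rho A + c *: rho B.
Proof. by move=> d1 hA hB; rewrite addrC (rho_linz d1) // addrC. Qed.

Definition ILP m y := forall (k : nat) x, homG (- k%:Z) x ->
  ((k < m)%N -> pi (brU (rho x) y) = brG x (pi y)) /\
  ((m <= k)%N -> brU (rho x) y = rho (brG x (pi y))).

Lemma IL m y : inA m y -> ILP m y.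
Proof.
elim=> {m y} [m|u hu|m c y z Ay IHy Az IHz|a b y z Ay IHy Az IHz] k x hx.
- by split => _; rewrite (br0r LU) pi0 (br0r LG) ?rho0 ?pi0.
- have [g [hg <-]] := Hiota_surj hu; rewrite Hpi_iota // (rho_br hx hg).
  split => hk //.
  have h1 : homG 1 (brG x g) by apply: homGe (brG1 hx hg); lia.
  by rewrite Hrho1 // Hpi_iota.
- have [hy m0] := inA_hom Ay; have [hz _] := inA_hom Az.
  have hpy : homG (m%:Z - k%:Z) (brG x (pi y)).
    by apply: homGe (br_deg LG hx (pi_hom _ hy)); lia.
  have hpz : homG (m%:Z - k%:Z) (brG x (pi z)).
    by apply: homGe (br_deg LG hx (pi_hom _ hz)); lia.
  have hwy : homU (m%:Z - k%:Z) (brU (rho x) y) by apply: homUe (br_deg LU (rho_deg hx) hy); lia.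
  have hwz : homU (m%:Z - k%:Z) (brU (rho x) z) by apply: homUe (br_deg LU (rho_deg hx) hz); lia.
  rewrite (pi_lin _ (inA_sp Ay) (inA_sp Az)) (brCr LU) (brCr LG).
  split => hk.
    rewrite pi_lin; try by apply: (spU_hom (k := m%:Z - k%:Z)) => //; lia.
    by rewrite (IHy k x hx).1 // (IHz k x hx).1.
  rewrite (IHy k x hx).2 // (IHz k x hx).2 // (@rho_linz (m%:Z - k%:Z)) //; lia.
- have [hy a0] := inA_hom Ay; have [hz b0] := inA_hom Az.
  have sy := inA_sp Ay; have sz := inA_sp Az.
  have hpy : homG a%:Z (pi y) by apply: pi_hom hy; lia.
  have hpz : homG b%:Z (pi z) by apply: pi_hom hz; lia.
  rewrite (pi_br sy sz).
  have JU := br_jac LU z (rho_deg hx) hy.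
  have JG := br_jac LG (pi z) hx hpy.
  set s := (-1 : K) ^ (- k%:Z * a%:Z) in JU JG.
  rewrite JU JG.
  split => hk.
  + have hT1 : homU (a%:Z + b%:Z - k%:Z) (brU (brU (rho x) y) z).
      by apply: homUe (br_deg LU (br_deg LU (rho_deg hx) hy) hz); lia.
    have hT2 : homU (a%:Z + b%:Z - k%:Z) (brU y (brU (rho x) z)).
      by apply: homUe (br_deg LU hy (br_deg LU (rho_deg hx) hz)); lia.
    rewrite pi_comb; try by apply: (spU_hom (k := a%:Z + b%:Z - k%:Z)) => //; lia.
    congr (_ + _ *: _).
    * case: (ltnP k a) => ka.
        have hw : homU (a%:Z - k%:Z) (brU (rho x) y) by apply: homUe (br_deg LU (rho_deg hx) hy); lia.
        rewrite pi_br //; last by apply: (spU_hom (k := a%:Z - k%:Z)) => //; lia.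
        by rewrite (IHy k x hx).1.
      rewrite (IHy k x hx).2 //.
      have hc : homG (- (k - a)%N%:Z) (brG x (pi y)) by apply: homGe (br_deg LG hx hpy); lia.
      by rewrite (IHz _ _ hc).1 //; lia.
    * case: (ltnP k b) => kb.
        have hw : homU (b%:Z - k%:Z) (brU (rho x) z) by apply: homUe (br_deg LU (rho_deg hx) hz); lia.
        rewrite pi_br //; last by apply: (spU_hom (k := b%:Z - k%:Z)) => //; lia.
        by rewrite (IHz k x hx).1.
      rewrite (IHz k x hx).2 //.
      have hc : homG (- (k - b)%N%:Z) (brG x (pi z)) by apply: homGe (br_deg LG hx hpz); lia.
      rewrite (br_anti LU hy (rho_deg hc)) (br_anti LG hpy hc).
      have hw : homU (a%:Z - (k - b)%N%:Z) (brU (rho (brG x (pi z))) y).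
        by apply: homUe (br_deg LU (rho_deg hc) hy); lia.
      have sw : spU (brU (rho (brG x (pi z))) y) by apply: (spU_hom _ hw); lia.
      rewrite (piN (spZ _ sw)) (piZ _ sw).
      by rewrite (IHy _ _ hc).1 //; lia.
  + have ka : (a <= k)%N by lia.
    have kb : (b <= k)%N by lia.
    rewrite (IHy k x hx).2 // (IHz k x hx).2 //.
    have hc : homG (- (k - a)%N%:Z) (brG x (pi y)) by apply: homGe (br_deg LG hx hpy); lia.
    have hc' : homG (- (k - b)%N%:Z) (brG x (pi z)) by apply: homGe (br_deg LG hx hpz); lia.
    rewrite (IHz _ _ hc).2; last by lia.
    rewrite (br_anti LU hy (rho_deg hc')) (br_anti LG hpy hc') (IHy _ _ hc').2; last by lia.
    have h1 : homG (a%:Z + b%:Z - k%:Z) (brG (brG x (pi y)) (pi z)).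
      by apply: homGe (br_deg LG hc hpz); lia.
    have h2 : homG (a%:Z + b%:Z - k%:Z) (brG (brG x (pi z)) (pi y)).
      by apply: homGe (br_deg LG hc' hpy); lia.
    rewrite -!scaleNr !scalerA (@rho_comb (a%:Z + b%:Z - k%:Z)) //; lia.
Qed.


Lemma rho_N (n : nat) x d : homG (- n%:Z) x -> D d -> D (brU (rho x) d).
Proof.
move=> hx [sd pd]; have zd := (span_ofP grU _ _).1 sd.
rewrite (comp_decomp grU d) (br_sumr LU); apply: Dsum => j _.
case: (boolP (pos j)) => pj; last by rewrite zd // (br0r LU); exact: D0.
have ej : j = `|j|%N%:Z by move: pj; rewrite /pos; lia.
have hj := comp_hom grU j d.
have Aj : inA `|j| (compU j d).
  by apply: genU; [move: pj; rewrite /pos; lia | rewrite -ej].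
have p0 : pi (compU j d) = 0 by rewrite pi_comp // pd comp0.
have [H1 H2] := IL Aj hx.
case: (ltnP n `|j|) => nj.
  apply: (Dhom (k := j - n%:Z)); first by lia.
    by apply: homUe (br_deg LU (rho_deg hx) hj); lia.
  by rewrite H1 // p0 (br0r LG).
by rewrite H2 // p0 (br0r LG) rho0; exact: D0.
Qed.

Lemma Nneg (j : nat) x : homG (- (p + j)%N%:Z) x -> Nprime_neg homU brU pi p T j (rho x).
Proof.
elim: j x => [|j IH] x hx /=.
  by apply: HTrho => //; rewrite addn0 in hx.
split; first exact: rho_deg.
split; first by move=> d Dd; exact: rho_N hx Dd.
move=> u hu; have [g [hg <-]] := Hiota_surj hu; rewrite (rho_br hx hg); apply: IH.
by apply: homGe (brG1 hx hg); lia.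
Qed.


Lemma sum_restrict (W : zmodType) (r t : seq int) (g : int -> W) :
  uniq r -> uniq t -> {subset r <= t} ->
  \sum_(k <- t | k \in r) g k = \sum_(k <- r) g k.
Proof.
move=> ur ut srt; rewrite -big_filter; apply: perm_big; apply: uniq_perm.
- exact: filter_uniq.
- exact: ur.
move=> k; rewrite mem_filter; case kr: (k \in r) => //=; exact: srt.
Qed.

Lemma Dtrans a b c : D (a - b) -> D (b - c) -> D (a - c).
Proof. by move=> h1 h2; have := DD h1 h2; rewrite addrA subrK. Qed.
Lemma Dsym a b : D (a - b) -> D (b - a).
Proof. by move=> h; have := DN h; rewrite opprB. Qed.
Lemma Dcomb c a b a' b' : D (a - b) -> D (a' - b') -> D ((c *: a + a') - (c *: b + b')).
Proof.
move=> h1 h2; have := DC c h1 h2.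
by rewrite scalerBr addrACA opprD.
Qed.

Definition sec (k : int) (y : VG) : VU :=
  epsilon (inhabits 0) (fun u => homU k u /\ pi u = y).
Lemma sec_spec (k : int) y : 0 < k -> homG k y -> homU k (sec k y) /\ pi (sec k y) = y.
Proof.
move=> k0 hy; apply: (epsilon_spec (inhabits 0) (fun u => homU k u /\ pi u = y)).
exact: pi_surj.
Qed.

Definition lam (k : int) (y : VG) : VU := if k <= 0 then rho y else sec k y.

Lemma nat_of_npos (k : int) : k <= 0 -> k = - (`|k|%N)%:Z.
Proof. lia. Qed.

Lemma lam_hom k y : homG k y -> homU k (lam k y).
Proof.
rewrite /lam; case: ifP => k0 hy.
  by rewrite (nat_of_npos k0) in hy *; apply: rho_deg.
by case: (sec_spec _ hy) => //; lia.
Qed.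

Lemma lam0 k : D (lam k 0).
Proof.
rewrite /lam; case: ifP => k0; first by rewrite rho0; exact: D0.
have [h1 h2] := sec_spec (y := 0) (k := k) ltac:(lia) (hom0 grG k).
by apply: (Dhom (k := k)) => //; lia.
Qed.

Lemma lam_lin k a x y : homG k x -> homG k y ->
  D (lam k (a *: x + y) - (a *: lam k x + lam k y)).
Proof.
rewrite /lam; case: ifP => k0 hx hy.
  by rewrite (rho_linz (d := k)) // ?subrr; [exact: D0 | lia].
have k0' : 0 < k by lia.
have [h1 p1] := sec_spec k0' (homC grG a hx hy).
have [h2 p2] := sec_spec k0' hx.
have [h3 p3] := sec_spec k0' hy.
apply: (Dhom (k := k)) => //; first by apply: (homB grU) => //; apply: (homC grU).
have s1 := spU_hom k0' h1; have s2 := spU_hom k0' h2; have s3 := spU_hom k0' h3.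
rewrite piB //; last by apply: (span_add LU).
by rewrite pi_lin // p1 p2 p3 subrr.
Qed.

Lemma lamZ k c y : homG k y -> D (lam k (c *: y) - c *: lam k y).
Proof.
move=> hy; have := lam_lin c hy (hom0 grG k); rewrite addr0 => H.
have := DD H (lam0 k); by rewrite opprD addrA subrK.
Qed.

Definition Lm (x : VG) : VU := \sum_(k <- gsupp grG x) lam k (compG k x).

Lemma sub_restrict (t r : seq int) (F : int -> VU) : uniq r -> uniq t -> {subset r <= t} ->
  (forall k, k \notin r -> D (F k)) -> D (\sum_(k <- t) F k - \sum_(k <- r) F k).
Proof.
move=> ur ut srt H; rewrite (bigID (mem r)) /= sum_restrict // addrAC subrr add0r.
rewrite -big_filter; apply: Dsum => k; rewrite mem_filter => /andP[kr _]; exact: H.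
Qed.

Lemma L_any x r : uniq r -> (forall k, k \notin r -> compG k x = 0) ->
  D (Lm x - \sum_(k <- r) lam k (compG k x)).
Proof.
move=> ur zr; set t := undup (gsupp grG x ++ r).
have ut : uniq t by apply: undup_uniq.
have H1 : D (\sum_(k <- t) lam k (compG k x) - Lm x).
  apply: sub_restrict => //; first exact: supp_uniq.
    by move=> k ks; rewrite mem_undup mem_cat ks.
  by move=> k /(@supp_zero _ _ _ grG) ->; apply: lam0.
have H2 : D (\sum_(k <- t) lam k (compG k x) - \sum_(k <- r) lam k (compG k x)).
  apply: sub_restrict => //.
    by move=> k ks; rewrite mem_undup mem_cat ks orbT.
  by move=> k /zr ->; apply: lam0.
exact: Dtrans (Dsym H1) H2.
Qed.

Lemma L_hom k y : homG k y -> D (Lm y - lam k y).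
Proof.
move=> hy; have := @L_any y [:: k] erefl.
rewrite big_seq1 (comp_id grG hy); apply => j; rewrite inE => jk.
by rewrite (comp_homog grG j hy) (negbTE jk).
Qed.

Lemma L_lin a x y : D (Lm (a *: x + y) - (a *: Lm x + Lm y)).
Proof.
set r := undup (gsupp grG x ++ gsupp grG y).
have ur : uniq r by apply: undup_uniq.
have zx : forall k, k \notin r -> compG k x = 0.
  by move=> k; rewrite mem_undup mem_cat negb_or => /andP[/(@supp_zero _ _ _ grG)].
have zy : forall k, k \notin r -> compG k y = 0.
  by move=> k; rewrite mem_undup mem_cat negb_or => /andP[_ /(@supp_zero _ _ _ grG)].
have H1 : D (Lm (a *: x + y) - \sum_(k <- r) lam k (compG k (a *: x + y))).
  by apply: L_any => // k kr; rewrite comp_lin zx // zy // scaler0 addr0.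
apply: Dtrans H1 _.
apply: (@Dtrans _ (\sum_(k <- r) (a *: lam k (compG k x) + lam k (compG k y)))).
  rewrite -sumrB; apply: Dsum => k _; rewrite comp_lin; apply: lam_lin; exact: comp_hom.
rewrite big_split /= -scaler_sumr; apply: Dcomb; apply: Dsym; apply: L_any => //.
Qed.

Lemma L0 : D (Lm 0).
Proof.
have := @L_any 0 [::] erefl (fun k _ => comp0 grG k); by rewrite big_nil subr0.
Qed.

Lemma L_sum (I : eqType) (s : seq I) (F : I -> VG) :
  D (Lm (\sum_(i <- s) F i) - \sum_(i <- s) Lm (F i)).
Proof.
elim: s => [|i s IH]; first by rewrite !big_nil subr0; exact: L0.
rewrite !big_cons; have := L_lin 1 (F i) (\sum_(j <- s) F j); rewrite !scale1r => H.
apply: Dtrans H _; rewrite opprD addrACA subrr add0r; exact: IH.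
Qed.

Lemma pair_NP (i j : int) a b : i <= 0 -> 0 < j -> homG i a -> homG j b ->
  D (lam (i + j) (brG a b) - brU (lam i a) (lam j b)).
Proof.
move=> i0 j0 ha hb.
rewrite /lam [in X in brU X _]ifT // [in X in brU _ X]ifN; last by rewrite -ltNge.
have [hy py] := sec_spec j0 hb.
rewrite (nat_of_npos i0) in ha.
have ej : j = `|j|%N%:Z by lia.
have Ay : inA `|j| (sec j b) by apply: genU; [lia | rewrite -ej].
have [H1 H2] := IL Ay ha.
case: (ltnP `|i| `|j|) => ij.
  rewrite ifN; last by rewrite -ltNge; lia.
  have k0 : 0 < i + j by lia.
  have hab : homG (i + j) (brG a b).
    by apply: homGe (br_deg LG ha hb); lia.
  have [h1 p1] := sec_spec k0 hab.
  have hw : homU (i + j) (brU (rho a) (sec j b)).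
    by apply: homUe (br_deg LU (rho_deg ha) hy); lia.
  apply: (Dhom (k := i + j)) => //; first exact: (homB grU).
  rewrite piB; [|exact: spU_hom h1|exact: spU_hom hw].
  by rewrite H1 // py p1 subrr.
rewrite ifT; last by lia.
by rewrite H2 // py subrr; exact: D0.
Qed.

Lemma pair_lam (i j : int) a b : homG i a -> homG j b ->
  D (lam (i + j) (brG a b) - brU (lam i a) (lam j b)).
Proof.
move=> ha hb; case: (lerP i 0) => i0; case: (lerP j 0) => j0.
- rewrite /lam ifT; last by lia.
  rewrite ifT // ifT //.
  rewrite (nat_of_npos i0) in ha; rewrite (nat_of_npos j0) in hb.
  by rewrite (rho_rho ha hb) subrr; exact: D0.
- exact: pair_NP.
-
  have := pair_NP j0 i0 hb ha; rewrite (addrC j i) => H.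
  rewrite (br_anti LG ha hb) (br_anti LU (lam_hom ha) (lam_hom hb)).
  set s := (-1 : K) ^ (i * j).
  have hba : homG (i + j) (brG b a) by rewrite addrC; exact: (br_deg LG hb ha).
  have := lamZ (- s) hba; rewrite !scaleNr => H2.
  apply: Dtrans H2 _.
  have -> : forall A B : VU, -(s *: A) - -(s *: B) = (- s) *: (A - B).
    by move=> A B; rewrite scalerBr !scaleNr.
  by apply: DZ.
- have k0 : 0 < i + j by lia.
  rewrite /lam ifN; last by rewrite -ltNge.
  rewrite ifN; last by rewrite -ltNge.
  rewrite ifN; last by rewrite -ltNge.
  have hab : homG (i + j) (brG a b) by exact: (br_deg LG ha hb).
  have [h1 p1] := sec_spec k0 hab.
  have [h2 p2] := sec_spec i0 ha.
  have [h3 p3] := sec_spec j0 hb.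
  have h4 := br_deg LU h2 h3.
  apply: (Dhom (k := i + j)) => //; first exact: (homB grU).
  rewrite piB //; [|exact: spU_hom h1|exact: spU_hom h4].
  by rewrite pi_br ?p1 ?p2 ?p3 ?subrr //; [exact: spU_hom h2|exact: spU_hom h3].
Qed.


Lemma L_br x y : D (Lm (brG x y) - brU (Lm x) (Lm y)).
Proof.
set sx := gsupp grG x; set sy := gsupp grG y.
have E1 : brG x y = \sum_(i <- sx) \sum_(j <- sy) brG (compG i x) (compG j y).
  rewrite {1}(comp_decomp grG x) {1}(comp_decomp grG y) (br_suml LG).
  by apply: eq_bigr => i _; rewrite (br_sumr LG).
have E2 : brU (Lm x) (Lm y) =
   \sum_(i <- sx) \sum_(j <- sy) brU (lam i (compG i x)) (lam j (compG j y)).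
  rewrite /Lm (br_suml LU); apply: eq_bigr => i _; by rewrite (br_sumr LU).
rewrite E1 E2.
apply: (@Dtrans _ (\sum_(i <- sx) Lm (\sum_(j <- sy) brG (compG i x) (compG j y)))).
  exact: L_sum.
apply: (@Dtrans _ (\sum_(i <- sx) \sum_(j <- sy) Lm (brG (compG i x) (compG j y)))).
  by rewrite -sumrB; apply: Dsum => i _; apply: L_sum.
rewrite -sumrB; apply: Dsum => i _; rewrite -sumrB; apply: Dsum => j _.
have hi := comp_hom grG i x; have hj := comp_hom grG j y.
exact: Dtrans (L_hom (br_deg LG hi hj)) (pair_lam hi hj).
Qed.

Lemma L_hom_ex k x : homG k x -> exists d, D d /\ homU k (Lm x - d).
Proof.
move=> hx; exists (Lm x - lam k x); split; first exact: L_hom.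
by rewrite opprB addrC subrK; apply: lam_hom.
Qed.

Lemma L_N x : inNprime homU brU pi p T (Lm x).
Proof.
exists (map (fun k => lam k (compG k x)) (gsupp grG x)); split; last by rewrite big_map.
move=> w /mapP[k _ ->]; have hk := comp_hom grG k x.
rewrite /lam; case: ifP => k0.
  have hk' : homG (- `|k|%N%:Z) (compG k x) by rewrite -(nat_of_npos k0).
  case: (leqP `|k| p) => np.
    by right; left; exists `|k|%N; split; [exact: np | exact: (HTrho np hk')].
  left; exists (`|k| - p)%N; apply: Nneg.
  by have -> : (p + (`|k| - p))%N = `|k|%N by lia.
right; right; exists k; split; first by lia.
by case: (sec_spec _ hk) => //; lia.
Qed.

Lemma L_inj x : D (Lm x) -> x = 0.
Proof.
move=> [sL pL]; have zL := (span_ofP grU _ _).1 sL.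
have Hneg : forall k, k <= 0 -> compG k x = 0.
  move=> k k0; have := zL k ltac:(rewrite /pos; lia).
  rewrite /Lm comp_big.
  have -> : \sum_(j <- gsupp grG x) compU k (lam j (compG j x)) =
            \sum_(j <- gsupp grG x) (if k == j then lam j (compG j x) else 0).
    by apply: eq_bigr => j _; rewrite (comp_homog grU k (lam_hom (comp_hom grG j x))).
  rewrite sum_pick ?supp_uniq //; case: ifP => ks; last first.
    by move=> _; apply: (@supp_zero _ _ _ grG); rewrite ks.
  rewrite /lam k0 => rk.
  have hk : homG (- `|k|%N%:Z) (compG k x) by rewrite -(nat_of_npos k0); exact: comp_hom.
  exact: rho_inj hk rk.
have Hj : forall j, spU (lam j (compG j x)) /\ pi (lam j (compG j x)) = compG j x.
  move=> j; case: (lerP j 0) => j0.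
    by rewrite Hneg // /lam j0 rho0; split; [exact: sp0U | exact: pi0].
  rewrite /lam ifN; last by rewrite -ltNge.
  have [h1 p1] := sec_spec j0 (comp_hom grG j x); split => //; exact: spU_hom h1.
rewrite -pL /Lm pi_sum; last by move=> j _; case: (Hj j).
rewrite [LHS](comp_decomp grG x); apply: eq_bigr => j _; by case: (Hj j).
Qed.

Lemma main_embed : embeds_in_reduced_prolongation homG brG homU brU pi p T.
Proof.
exists Lm; split; first exact: L_N.
split; first exact: L_lin.
split; first exact: L_br.
split; first exact: L_hom_ex.
exact: L_inj.
Qed.

End Main.

End Aux.

Theorem proposition3p14 (K : numFieldType)
  (VG : lmodType K) (homG : int -> VG -> Prop) (brG : VG -> VG -> VG)
  (VU : lmodType K) (homU : int -> VU -> Prop) (brU : VU -> VU -> VU)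
  (iota : VG -> VU) (pi : VU -> VG) (rho : VG -> VU)
  (p : nat) (T : nat -> VU -> Prop) :
  (* G: positively 0-transitive graded Lie superalgebra, G_+ generated by G_1 *)
  is_lie_super homG brG ->
  pos_zero_trans homG brG ->
  (forall v, span_of pos homG v <-> gen_sub brG (homG 1) v) ->
  (* U: universal Lie superalgebra associated to U_1 := G_1 (via iota) *)
  is_lie_super homU brU ->
  lin_on (homG 1) iota ->
  (forall g, homG 1 g -> homU 1 (iota g)) ->
  (forall g g', homG 1 g -> homG 1 g' -> iota g = iota g' -> g = g') ->
  (forall u, homU 1 u -> exists g, homG 1 g /\ iota g = u) ->
  universal_neg homU brU ->
  free_pos homU brU ->
  (* pi : U_+ -> G_+ canonical morphism, identity on U_1 = G_1 *)
  lie_mor_pos homU brU homG brG pi ->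
  (forall g, homG 1 g -> pi (iota g) = g) ->
  (* rho : G_{1-} -> U_{1-} *)
  (forall g, homG 1 g -> rho g = iota g) ->
  (forall (k : nat) x, homG (- k%:Z) x ->
     homU (- k%:Z) (rho x) /\
     forall g, homG 1 g -> brU (rho x) (iota g) = rho (brG x g)) ->
  (* T k = T_{-k}, 0 <= k <= p, subspaces of U_{-k} *)
  (forall k, (k <= p)%N -> subspace (T k) /\ (forall x, T k x -> homU (- k%:Z) x)) ->
  (forall k x, (k <= p)%N -> homG (- k%:Z) x -> T k (rho x)) ->
  (forall k x u, (k <= p)%N -> T k x -> homU 1 u ->
     if k is k'.+1 then T k' (brU x u) else homU 1 (brU x u)) ->
  (forall k x d, (k <= p)%N -> T k x -> inD homU pi d -> inD homU pi (brU x d)) ->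
  embeds_in_reduced_prolongation homG brG homU brU pi p T.
Proof.
move=> *; exact: (@Aux.main_embed K VG homG brG VU homU brU iota pi rho p T) => //.
Qed.
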